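(* Consider a system of $B$ boxes, each caching $M$ distinct contents (in an arbitrary placement) and able to serve at most $U$ concurrent unit-rate streams. The catalogue consists of a fixed finite number of classes $i\in\mathcal{I}$; class $i$ contains $\alpha_iB$ contents, each receiving requests according to an independent Poisson process of rate $\nu_i>0$; let $\alpha=\sum_i\alpha_i$. Service times are independent exponential of mean $1$, and an arriving request is accepted iff the resulting vector $\mathbf{n}$ of ongoing requests per content satisfies $\sum_{c\in\mathcal{S}}n_c\le U\,|\{b:\mathcal{S}\cap\mathcal{J}_b\neq\emptyset\}|$ for every set of contents $\mathcal{S}$ (where $\mathcal{J}_b$ is the cache of box $b$), and rejected otherwise. Let $M'=\lceil 2M/\alpha\rceil$. Then (i) more than half of the contents are replicated (cached) at most $M'$ times; and (ii) for each content replicated at most $M'$ times, the stationary loss probability of its requests is at least $E(\inf_i\nu_i,M'U)>0$, where $$E(\nu,C)=\frac{\nu^C}{C!}\Big[\sum_{n=0}^{C}\frac{\nu^n}{n!}\Big]^{-1}$$ is the Erlang function.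
   Context: The acceptance condition is equivalent (by Hall's theorem) to the existence of an assignment of all ongoing requests to boxes holding the requested content with at most $U$ requests per box. *)

(* Defs.v *)
From mathcomp Require Import all_boot all_order all_algebra.
Set Implicit Arguments. Unset Strict Implicit. Unset Printing Implicit Defensive.
Import Order.TTheory GRing.Theory Num.Theory.
Local Open Scope ring_scope.

Definition erlang (R : fieldType) (nu : R) (C : nat) : R :=
  (nu ^+ C / (C`!)%:R) / (\sum_(n < C.+1) nu ^+ n / (n`!)%:R).

Section Model.
Variables (Cn : finType) (B M U : nat) (J : 'I_B -> {set Cn}).

Definition admissible (n : Cn -> nat) : bool :=
  [forall S : {set Cn},
     (\sum_(c in S) n c <= U * #|[set b | S :&: J b != set0]|)%N].

(* States: vectors of ongoing requests per content.  Any admissible vector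
   has n_c <= U * B, so this finite type contains all admissible states. *)
Definition state := {ffun Cn -> 'I_(U * B).+1}.
Definition nv (x : state) : Cn -> nat := fun c => nat_of_ord (x c).
Definition adm_state (x : state) : bool := admissible (nv x).

Definition is_arrival (c : Cn) (x y : state) : bool :=
  [forall d, nv y d == (nv x d + (d == c))%N].
Definition is_departure (c : Cn) (x y : state) : bool :=
  [forall d, (nv y d + (d == c))%N == nv x d].

Definition replication (c : Cn) : nat := #|[set b | c \in J b]|.

(* M' = ceil(2M/alpha) with alpha = #|Cn| / B, i.e. ceil(2 M B / #|Cn|) *)
Definition Mprime : nat := ((2 * M * B + #|Cn| - 1) %/ #|Cn|)%N.

Variables (R : realFieldType) (I : finType) (cls : Cn -> I) (nu : I -> R).

Definition rate (x y : state) : R :=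
  \sum_(c : Cn) ((if is_arrival c x y && adm_state y then nu (cls c) else 0)
                 + (if is_departure c x y then (nv x c)%:R else 0)).

Definition stationary (pi : {ffun state -> R}) : Prop :=
  [/\ forall x, 0 <= pi x,
      \sum_x pi x = 1,
      forall x, ~~ adm_state x -> pi x = 0
    & forall x, pi x * (\sum_y rate x y) = \sum_y pi y * rate y x].

Definition blocked (c : Cn) (x : state) : bool :=
  ~~ [exists y, is_arrival c x y && adm_state y].

(* stationary loss probability of requests for c (PASTA) *)
Definition loss_prob (pi : {ffun state -> R}) (c : Cn) : R :=
  \sum_(x | blocked c x) pi x.

End Model.

(* Main.v *)
Require Import Defs.
From mathcomp Require Import all_boot all_order all_algebra ring lra zify.
Import Order.TTheory GRing.Theory Num.Theory.
Local Open Scope ring_scope.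
Set Implicit Arguments. Unset Strict Implicit. Unset Printing Implicit Defensive.

Section ErlangMath.
Variable R : realFieldType.

Definition ea (nu : R) (k : nat) : R := nu ^+ k / (k`!)%:R.
Definition eA (nu : R) (j : nat) : R := \sum_(0 <= k < j.+1) ea nu k.

Lemma ea_gt0 nu k : 0 < nu -> 0 < ea nu k.
Proof. by move=> h; rewrite /ea divr_gt0 // ?exprn_gt0 // ltr0n fact_gt0. Qed.

Lemma ea0 nu : ea nu 0 = 1.
Proof. by rewrite /ea expr0 fact0 divr1. Qed.

Lemma eA_gt0 nu j : 0 < nu -> 0 < eA nu j.
Proof.
move=> h; rewrite /eA big_nat_recl // ea0.
have : 0 <= \sum_(0 <= i < j) ea nu i.+1 by apply: sumr_ge0 => i _; apply: ltW; apply: ea_gt0.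
lra.
Qed.

Lemma eaS nu k : ea nu k.+1 * k.+1%:R = nu * ea nu k.
Proof.
rewrite /ea factS natrM exprS.
have h1 : (k.+1%:R : R) != 0 by rewrite pnatr_eq0.
have h2 : ((k`!)%:R : R) != 0 by rewrite pnatr_eq0 -lt0n fact_gt0.
by field; rewrite h2 /= addrC natr1.
Qed.

Lemma erlangE nu C : erlang nu C = ea nu C / eA nu C.
Proof. by rewrite /erlang /eA /ea big_mkord. Qed.

Lemma eA_step nu j : 0 < nu -> nu * eA nu j <= j.+1%:R * eA nu j.+1.
Proof.
move=> nu0.
have H : nu * eA nu j <= j.+1%:R * \sum_(0 <= k < j.+1) ea nu k.+1.
  rewrite /eA !big_distrr /=; apply: ler_sum_nat => k /andP[_ hk].
  rewrite -eaS [X in _ <= X]mulrC; apply: ler_wpM2l; first exact/ltW/ea_gt0.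
  by rewrite ler_nat.
rewrite /eA (big_nat_recl j.+1) // mulrDr.
have h0 : 0 <= j.+1%:R * ea nu 0 by rewrite mulr_ge0 // ltW // ea_gt0.
rewrite /eA in H; lra.
Qed.

Lemma ea_mono nu j C : 0 < nu -> (j <= C)%N -> ea nu C * eA nu j <= eA nu C * ea nu j.
Proof.
move=> nu0; elim: C => [|C IH] hj.
  by move: hj; rewrite leqn0 => /eqP ->; rewrite mulrC.
case: (eqVneq j C.+1) => [->|hne]; first by rewrite mulrC.
have hjC : (j <= C)%N by move: hj hne; rewrite leq_eqVlt => /orP[->|].
have IH' := IH hjC.
have st : ea nu C.+1 * eA nu C <= eA nu C.+1 * ea nu C.
  have hC : (0 : R) < C.+1%:R by rewrite ltr0n.
  rewrite -(ler_pM2r hC).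
  have -> : ea nu C.+1 * eA nu C * C.+1%:R = ea nu C * (nu * eA nu C).
    by rewrite mulrAC eaS; ring.
  have -> : eA nu C.+1 * ea nu C * C.+1%:R = ea nu C * (C.+1%:R * eA nu C.+1) by ring.
  by apply: ler_wpM2l; [exact/ltW/ea_gt0 | exact: eA_step].
have hC : 0 < ea nu C by exact: ea_gt0.
rewrite -(ler_pM2r hC).
apply: (@le_trans _ _ (ea nu C.+1 * (eA nu C * ea nu j))).
  by rewrite -mulrA; apply: ler_wpM2l; [exact/ltW/ea_gt0 | rewrite mulrC].
have -> : ea nu C.+1 * (eA nu C * ea nu j) = (ea nu C.+1 * eA nu C) * ea nu j by ring.
have -> : eA nu C.+1 * ea nu j * ea nu C = (eA nu C.+1 * ea nu C) * ea nu j by ring.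
by apply: ler_wpM2r; [exact/ltW/ea_gt0 | exact: st].
Qed.

Lemma abel (a r : nat -> R) n :
  \sum_(0 <= k < n.+1) a k * r k =
  \sum_(0 <= j < n.+1) (\sum_(0 <= k < j.+1) a k) * (r j - r j.+1)
  + (\sum_(0 <= k < n.+1) a k) * r n.+1.
Proof.
elim: n => [|n IH]; first by rewrite !big_nat1; ring.
rewrite big_nat_recr //= IH [in RHS]big_nat_recr //=.
rewrite [\sum_(0 <= k < n.+2) a k]big_nat_recr //=.
ring.
Qed.

Lemma erlang_le (nu : R) C (p q : nat -> R) :
  0 < nu -> (forall k, 0 <= q k <= p k) ->
  (forall k, nu * q k = k.+1%:R * p k.+1) -> p C.+1 = 0 ->
  \sum_(0 <= k < C.+1) p k = 1 ->
  erlang nu C <= \sum_(0 <= k < C.+1) (p k - q k).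
Proof.
move=> nu0 hqp hfl hC hsum.
have ean0 k : ea nu k != 0 by rewrite gt_eqF // ea_gt0.
pose r k := p k / ea nu k.
have pE k : p k = ea nu k * r k by rewrite /r mulrC divfK.
have rS k : r k.+1 = q k / ea nu k.
  rewrite /r; apply/eqP; rewrite eqr_div //; apply/eqP.
  have hk : (k.+1%:R : R) != 0 by rewrite pnatr_eq0.
  apply: (mulIf hk).
  transitivity (nu * q k * ea nu k); first by rewrite hfl; ring.
  have := eaS nu k; move=> e /=; rewrite -(mulrA (q k)) e; ring.
pose d j := r j - r j.+1.
have hd j : 0 <= d j.
  rewrite /d subr_ge0 rS /r; apply: ler_wpM2r.
    by rewrite invr_ge0 ltW // ea_gt0.
  by case/andP: (hqp j).
have hpq j : p j - q j = ea nu j * d j.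
  rewrite /d [p j]pE.
  have -> : q j = ea nu j * r j.+1 by rewrite rS mulrC divfK.
  ring.
have h1 : 1 = \sum_(0 <= j < C.+1) eA nu j * d j.
  rewrite -hsum.
  have -> : \sum_(0 <= k < C.+1) p k = \sum_(0 <= k < C.+1) ea nu k * r k.
    by apply: eq_bigr => k _; rewrite -pE.
  by rewrite abel {3}/r hC mul0r mulr0 addr0.
have -> : \sum_(0 <= k < C.+1) (p k - q k) = \sum_(0 <= j < C.+1) ea nu j * d j.
  by apply: eq_bigr => j _; rewrite hpq.
rewrite erlangE ler_pdivrMr ?eA_gt0 //.
rewrite -[ea nu C]mulr1 h1 big_distrr big_distrl /=.
apply: ler_sum_nat => j /andP[_ hj].
have -> : ea nu C * (eA nu j * d j) = (ea nu C * eA nu j) * d j by ring.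
have -> : ea nu j * d j * eA nu C = (eA nu C * ea nu j) * d j by ring.
by apply: ler_wpM2r => //; apply: ea_mono.
Qed.

Lemma erlang_mono_nu (nu0 nu : R) C : 0 < nu0 -> nu0 <= nu -> erlang nu0 C <= erlang nu C.
Proof.
move=> h0 h1.
have hnu : 0 < nu by apply: lt_le_trans h1.
rewrite !erlangE ler_pdivrMr ?eA_gt0 // mulrAC ler_pdivlMr ?eA_gt0 //.
rewrite /eA !big_distrr /=; apply: ler_sum_nat => k /andP[_ hk].
rewrite /ea.
have hf : forall n, (0 : R) < (n`!)%:R by move=> n; rewrite ltr0n fact_gt0.
have -> : nu0 ^+ C / (C`!)%:R * (nu ^+ k / (k`!)%:R) =
          (nu0 ^+ C * nu ^+ k) * ((C`!)%:R^-1 * (k`!)%:R^-1) by ring.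
have -> : nu ^+ C / (C`!)%:R * (nu0 ^+ k / (k`!)%:R) =
          (nu ^+ C * nu0 ^+ k) * ((C`!)%:R^-1 * (k`!)%:R^-1) by ring.
apply: ler_wpM2r; first by rewrite mulr_ge0 // invr_ge0 ltW.
have hkC : (k <= C)%N by [].
rewrite -(subnKC hkC) !exprD.
have -> : nu0 ^+ k * nu0 ^+ (C - k) * nu ^+ k = (nu0 ^+ k * nu ^+ k) * nu0 ^+ (C - k) by ring.
have -> : nu ^+ k * nu ^+ (C - k) * nu0 ^+ k = (nu0 ^+ k * nu ^+ k) * nu ^+ (C - k) by ring.
apply: ler_wpM2l; first by rewrite mulr_ge0 // exprn_ge0 // ltW.
by apply: lerXn2r => //; rewrite nnegrE ltW.
Qed.

End ErlangMath.

Section Stoch.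
Variables (Cn I : finType) (B U : nat) (J : 'I_B -> {set Cn}).
Variables (R : realFieldType) (cls : Cn -> I) (nu : I -> R).
Local Notation st := (state Cn B U).

Lemma arr_val c (x y : st) : is_arrival c x y -> forall d, nv y d = (nv x d + (d == c))%N.
Proof. by move=> /forallP h d; apply/eqP; apply: h. Qed.

Lemma dep_val c (x y : st) : is_departure c x y -> forall d, (nv y d + (d == c))%N = nv x d.
Proof. by move=> /forallP h d; apply/eqP; apply: h. Qed.

Lemma arr_uniq c (x y y' : st) : is_arrival c x y -> is_arrival c x y' -> y = y'.
Proof.
move=> h h'; apply/ffunP => d; apply: val_inj.
by change (nv y d = nv y' d); rewrite (arr_val h d) (arr_val h' d).
Qed.

Lemma dep_uniq c (y x x' : st) : is_departure c y x -> is_departure c y x' -> x = x'.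
Proof.
move=> h h'; apply/ffunP => d; apply: val_inj.
change (nv x d = nv x' d); apply/eqP; rewrite -(eqn_add2r (d == c)).
by rewrite (dep_val h d) (dep_val h' d).
Qed.

Lemma dep_exists c (y : st) : (0 < nv y c)%N -> exists x : st, is_departure c y x.
Proof.
move=> hy.
exists [ffun d => if d == c then inord (nv y c).-1 else y d].
apply/forallP => d; rewrite /nv ffunE.
case: (eqVneq d c) => [->|hne] /=; last by rewrite addn0.
have hb : ((nv y c).-1 < (U * B).+1)%N.
  by apply: leq_ltn_trans (leq_pred _) (ltn_ord (y c)).
by rewrite inordK // addn1 prednK.
Qed.

Lemma sum_unique (T : finType) (P : pred T) (v : R) :
  (forall y y', P y -> P y' -> y = y') ->
  \sum_y (if P y then v else 0) = if [exists y, P y] then v else 0.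
Proof.
move=> hu; case: existsP => [[y0 hy0]|hn].
  rewrite (bigD1 y0) //= hy0 big1 ?addr0 // => y hy.
  case: ifP => // hPy; by rewrite (hu _ _ hPy hy0) eqxx in hy.
by apply: big1 => y _; case: ifP => // hPy; exfalso; apply: hn; exists y.
Qed.

Lemma sum_restrict (T : finType) (A P : pred T) (f : T -> R) (v : R) :
  (forall x, P x -> A x) ->
  \sum_(x | A x) f x * (if P x then v else 0) = v * \sum_(x | P x) f x.
Proof.
move=> hPA; rewrite big_distrr /= big_mkcond [RHS]big_mkcond /=.
apply: eq_bigr => x _.
case hP: (P x); first by rewrite hPA // mulrC.
by case: (A x); rewrite ?mulr0.
Qed.

Lemma F1 c k (x y : st) : (nv x c <= k)%N -> (k < nv y c)%N ->
  rate J cls nu x y = if is_arrival c x y && adm_state J y then nu (cls c) else 0.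
Proof.
move=> hx hy; rewrite /rate (bigD1 c) //= big1 ?addr0.
  have -> : is_departure c x y = false.
    by apply/negP => hd; have := dep_val hd c; rewrite eqxx; lia.
  by rewrite addr0.
move=> c' hc'.
case: ifP => [/andP[ha _]|_].
  by have := arr_val ha c; rewrite eq_sym (negbTE hc'); lia.
case: ifP => hd; last by rewrite addr0.
by have := dep_val hd c; rewrite eq_sym (negbTE hc'); lia.
Qed.

Lemma F2 c k (x y : st) : (nv x c <= k)%N -> (k < nv y c)%N ->
  rate J cls nu y x = if is_departure c y x then (nv y c)%:R else 0.
Proof.
move=> hx hy; rewrite /rate (bigD1 c) //= big1 ?addr0.
  have -> : is_arrival c y x && adm_state J x = false.
    by apply/negP => /andP[ha _]; have := arr_val ha c; rewrite eqxx; lia.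
  by rewrite add0r.
move=> c' hc'.
case: ifP => [/andP[ha _]|_].
  by have := arr_val ha c; rewrite eq_sym (negbTE hc'); lia.
case: ifP => hd; last by rewrite addr0.
by have := dep_val hd c; rewrite eq_sym (negbTE hc'); lia.
Qed.

Lemma cut (pi : {ffun st -> R}) (A : pred st) :
  (forall x, pi x * (\sum_y rate J cls nu x y) = \sum_y pi y * rate J cls nu y x) ->
  \sum_(x | A x) \sum_(y | ~~ A y) pi x * rate J cls nu x y =
  \sum_(x | A x) \sum_(y | ~~ A y) pi y * rate J cls nu y x.
Proof.
move=> hgb.
have H : \sum_(x | A x) (\sum_(y | A y) pi x * rate J cls nu x y
                       + \sum_(y | ~~ A y) pi x * rate J cls nu x y) =
         \sum_(x | A x) (\sum_(y | A y) pi y * rate J cls nu y x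
                       + \sum_(y | ~~ A y) pi y * rate J cls nu y x).
  apply: eq_bigr => x _.
  have e1 : \sum_y pi x * rate J cls nu x y = \sum_(y | A y) pi x * rate J cls nu x y
                       + \sum_(y | ~~ A y) pi x * rate J cls nu x y by rewrite (bigID A).
  have e2 : \sum_y pi y * rate J cls nu y x = \sum_(y | A y) pi y * rate J cls nu y x
                       + \sum_(y | ~~ A y) pi y * rate J cls nu y x by rewrite (bigID A).
  by rewrite -e1 -e2 -big_distrr /= hgb.
move: H; rewrite !big_split /=.
rewrite [X in X + _ = _ -> _](exchange_big) /=.
by move/addrI.
Qed.

Definition pk (pi : {ffun st -> R}) c k := \sum_(x | nv x c == k) pi x.
Definition qk (pi : {ffun st -> R}) c k :=
  \sum_(x | (nv x c == k) && ~~ blocked J c x) pi x.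

Lemma flux (pi : {ffun st -> R}) c k :
  (forall x, pi x * (\sum_y rate J cls nu x y) = \sum_y pi y * rate J cls nu y x) ->
  nu (cls c) * qk pi c k = k.+1%:R * pk pi c k.+1.
Proof.
move=> hgb.
have := cut (fun x : st => (nv x c <= k)%N) hgb.
have L : \sum_(x | (nv x c <= k)%N) \sum_(y | ~~ (nv y c <= k)%N) pi x * rate J cls nu x y
   = \sum_(x | (nv x c <= k)%N)
        pi x * (if (nv x c == k) && ~~ blocked J c x then nu (cls c) else 0).
  apply: eq_bigr => x hx.
  rewrite -big_distrr /=; congr (_ * _).
  transitivity (\sum_y (if nv x c == k then
      (if is_arrival c x y && adm_state J y then nu (cls c) else 0) else 0)).
    rewrite big_mkcond; apply: eq_bigr => y _ /=.
    case hy: (nv y c <= k)%N => /=.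
      case: (eqVneq (nv x c) k) => hk //=.
      case ha: (is_arrival c x y) => //=.
      by have := arr_val ha c; rewrite eqxx; lia.
    move/negbT: hy; rewrite -ltnNge => hy; rewrite (F1 hx hy).
    case: (eqVneq (nv x c) k) => hk //=.
    case ha: (is_arrival c x y) => //=.
    by have := arr_val ha c; rewrite eqxx; lia.
  case: eqP => _ /=; last by rewrite big1.
  rewrite sum_unique; last by move=> y y' /andP[h _] /andP[h' _]; apply: arr_uniq h h'.
  by rewrite /blocked negbK.
have Rr : \sum_(x | (nv x c <= k)%N) \sum_(y | ~~ (nv y c <= k)%N) pi y * rate J cls nu y x
   = \sum_(y | ~~ (nv y c <= k)%N)
        pi y * (if nv y c == k.+1 then k.+1%:R else 0).
  rewrite exchange_big /=; apply: eq_bigr => y hy.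
  rewrite -big_distrr /=; congr (_ * _).
  rewrite -ltnNge in hy.
  transitivity (\sum_x (if nv y c == k.+1 then
      (if is_departure c y x then (nv y c)%:R else 0) else 0 : R)).
    rewrite big_mkcond; apply: eq_bigr => x _ /=.
    case hx: (nv x c <= k)%N => /=.
      rewrite (F2 hx hy).
      case: (eqVneq (nv y c) k.+1) => hk //=.
      case hd: (is_departure c y x) => //=.
      by have := dep_val hd c; rewrite eqxx; lia.
    case: (eqVneq (nv y c) k.+1) => hk //=.
    case hd: (is_departure c y x) => //=.
    by have := dep_val hd c; rewrite eqxx; lia.
  case: eqP => hk /=; last by rewrite big1.
  rewrite sum_unique; last by move=> x x'; apply: dep_uniq.
  case: existsP => [_|hn]; first by rewrite hk.
  exfalso; apply: hn; apply: dep_exists; lia.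
rewrite L Rr (sum_restrict _ (A := fun x : st => (nv x c <= k)%N)); last first.
  by move=> x /andP[/eqP -> _].
rewrite (sum_restrict _ (A := fun y : st => ~~ (nv y c <= k)%N)); last first.
  by move=> y /eqP ->; rewrite ltnn.
by [].
Qed.

End Stoch.

Lemma part1 (Cn : finType) (B M : nat) (J : 'I_B -> {set Cn}) :
  (0 < #|Cn|)%N -> (forall b, #|J b| = M) ->
  (#|Cn| < 2 * #|[set c | (replication J c <= Mprime Cn B M)%N]|)%N.
Proof.
move=> hK hJ.
set M' := Mprime Cn B M; set K := #|Cn|.
set S := [set c | (replication J c <= M')%N].
have hsum : (\sum_c replication J c = B * M)%N.
  rewrite (eq_bigr (fun c => \sum_b (c \in J b : nat))); last first.
    move=> c _; rewrite /replication -sum1_card big_mkcond /=.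
    by apply: eq_bigr => b _; rewrite inE; case: (c \in J b).
  rewrite exchange_big /=.
  rewrite (eq_bigr (fun b => M)); last first.
    move=> b _; rewrite -(hJ b) -sum1_card [RHS]big_mkcond /=.
    by apply: eq_bigr => c _; case: (c \in J b).
  by rewrite big_const_ord iter_addn_0 mulnC.
have hceil : (2 * M * B <= M' * K)%N.
  rewrite /M' /Mprime -/K.
  have e := divn_eq (2 * M * B + K - 1) K.
  have l := ltn_pmod (2 * M * B + K - 1) hK.
  move: e l; set q := (_ %/ K)%N; set r := (_ %% K)%N; lia.
have hbig : (M'.+1 * #|~: S| <= \sum_c replication J c)%N.
  rewrite [X in (_ <= X)%N](bigID (fun c => c \in ~: S)) /=.
  apply: leq_trans (leq_addr _ _).
  rewrite mulnC -sum_nat_const; apply: leq_sum => c; rewrite !inE -ltnNge.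
  by [].
have hC := cardsC S.
rewrite -/K in hC.
nia.
Qed.

Lemma adm_bound (Cn : finType) (B U : nat) (J : 'I_B -> {set Cn}) (x : state Cn B U) c :
  adm_state J x -> (nv x c <= U * replication J c)%N.
Proof.
move=> /forallP /(_ [set c]); rewrite big_set1.
have -> : [set b | [set c] :&: J b != set0] = [set b | c \in J b]; last by [].
apply/setP => b; rewrite !inE.
apply/set0Pn/idP => [[y]|h]; first by rewrite !inE => /andP[/eqP -> ->].
by exists c; rewrite !inE eqxx h.
Qed.

Lemma partition_nv (Cn : finType) (B U : nat) (R : realFieldType)
   (f : state Cn B U -> R) c K :
  (forall x, (K <= nv x c)%N -> f x = 0) ->
  \sum_x f x = \sum_(0 <= k < K) \sum_(x | nv x c == k) f x.
Proof.
move=> hf.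
rewrite (eq_bigr (fun k => \sum_x if nv x c == k then f x else 0)); last first.
  by move=> k _; rewrite big_mkcond.
rewrite exchange_big /=; apply: eq_bigr => x _.
case: (ltnP (nv x c) K) => hx.
  rewrite (bigD1_seq (nv x c)) ?mem_index_iota ?iota_uniq //= eqxx big1 ?addr0 //.
  by move=> k hk; rewrite eq_sym (negbTE hk).
by rewrite hf // big1 // => k _; case: ifP.
Qed.

Theorem lemma1 (R : realFieldType) (Cn I : finType) (B M U : nat)
    (J : 'I_B -> {set Cn}) (cls : Cn -> I) (nu : I -> R) :
  (0 < B)%N -> (0 < #|Cn|)%N ->
  (forall b, #|J b| = M) ->
  (forall i, 0 < nu i) ->
  let M' := Mprime Cn B M in
  (#|Cn| < 2 * #|[set c | (replication J c <= M')%N]|)%N /\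
  (forall pi : {ffun state Cn B U -> R},
     stationary J cls nu pi ->
     forall c : Cn, (replication J c <= M')%N ->
       let numin := \big[Num.min/nu (cls c)]_(i : I) nu i in
       0 < erlang numin (M' * U) /\
       erlang numin (M' * U) <= loss_prob J pi c).
Proof.
move=> hB hCn hJ hnu M'; split; first exact: part1.
move=> pi [hpos hsum hadm hgb] c hrep numin.
set C := (M' * U)%N.
have hnuc : 0 < nu (cls c) := hnu _.
have hmin_pos : 0 < numin by apply: lt_bigmin => // i _; exact: hnu.
have hmin_le : numin <= nu (cls c) by apply: bigmin_le_id.
split; first by rewrite erlangE divr_gt0 ?ea_gt0 ?eA_gt0.
have hzero x : (C < nv x c)%N -> pi x = 0.
  move=> hx; apply: hadm; apply/negP => ha.
  have := adm_bound c ha; have : (U * replication J c <= C)%N.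
    by rewrite /C mulnC leq_mul2r hrep orbT.
  lia.
have hp k : (C < k)%N -> pk pi c k = 0.
  by move=> hk; apply: big1 => x /eqP hx; apply: hzero; rewrite hx.
have hpq k : pk pi c k - qk J pi c k = \sum_(x | (nv x c == k) && blocked J c x) pi x.
  by rewrite /pk (bigID (blocked J c)) /= addrK.
have hqp k : 0 <= qk J pi c k <= pk pi c k.
  apply/andP; split; first by apply: sumr_ge0 => x _.
  by rewrite -subr_ge0 hpq; apply: sumr_ge0 => x _.
have hs1 : \sum_(0 <= k < C.+1) pk pi c k = 1.
  by rewrite -hsum (partition_nv (K := C.+1) (c := c)).
have hloss : loss_prob J pi c = \sum_(0 <= k < C.+1) (pk pi c k - qk J pi c k).
  rewrite /loss_prob big_mkcond /= (partition_nv (K := C.+1) (c := c)); last first.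
    by move=> x hx; rewrite hzero //; case: ifP.
  apply: eq_bigr => k _; rewrite hpq.
  by rewrite big_mkcondr.
rewrite hloss.
apply: le_trans (erlang_mono_nu _ hmin_pos hmin_le) _.
apply: erlang_le => //.
  by move=> k; apply: (flux c k hgb).
by apply: hp.
Qed.
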